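(* Let $\mathbb{F}$ be a field, let $A=(a_{ij})\in M_n(\mathbb{F})$, and let $S_A\colon M_n(\mathbb{F})\to M_n(\mathbb{F})$ be the Schur map $S_A(B)=A\circ B$. Then the following are equivalent: (i) $S_A$ is a nonzero homomorphism (with respect to matrix multiplication); (ii) there is an invertible diagonal matrix $\Lambda\in M_n(\mathbb{F})$ such that $S_A(X)=\Lambda X\Lambda^{-1}$ for all $X\in M_n(\mathbb{F})$; (iii) $a_{ij}=a_{ik}a_{kj}$ and $a_{ii}=1$ for all $1\le i,j,k\le n$.
   Context: $A\circ B=(a_{ij}b_{ij})$ denotes the entrywise (Schur) product of matrices over $\mathbb{F}$. *)

(* Defs.v *)
From mathcomp Require Import all_boot all_order all_algebra.
Set Implicit Arguments. Unset Strict Implicit. Unset Printing Implicit Defensive.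
Import GRing.Theory.
Local Open Scope ring_scope.

Definition schur (F : fieldType) (n : nat) (A B : 'M[F]_n) : 'M[F]_n :=
  \matrix_(i, j) (A i j * B i j).

Definition schur_map (F : fieldType) (n : nat) (A : 'M[F]_n) : 'M[F]_n -> 'M[F]_n :=
  fun B => schur A B.

Definition mul_hom (F : fieldType) (n : nat) (f : 'M[F]_n -> 'M[F]_n) : Prop :=
  forall X Y : 'M[F]_n, f (X *m Y) = f X *m f Y.

Definition nonzero_map (F : fieldType) (n : nat) (f : 'M[F]_n -> 'M[F]_n) : Prop :=
  exists X : 'M[F]_n, f X != 0.

(* Main.v *)
Require Import Defs.
From mathcomp Require Import all_boot all_order all_algebra.
From mathcomp Require Import ring.
Local Open Scope ring_scope.
Import GRing.Theory.

Lemma i_to_iii (F : fieldType) (n : nat) (A : 'M[F]_n) :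
  nonzero_map (schur_map A) /\ mul_hom (schur_map A) ->
  (forall i j k : 'I_n, A i j = A i k * A k j) /\ (forall i : 'I_n, A i i = 1).
Proof.
move=> [[X HX] Hh].
have E : forall i j k : 'I_n, A i j = A i k * A k j.
  move=> i j k.
  have := congr1 (fun M : 'M[F]_n => M i j) (Hh (delta_mx i k) (delta_mx k j)).
  rewrite mul_delta_mx /schur_map /schur !mxE !eqxx /= mulr1 => ->.
  rewrite (bigD1 k) //= big1 ?addr0; last first.
    move=> l /negbTE Hl; rewrite !mxE Hl /= andbF mulr0 mul0r //.
  by rewrite !mxE !eqxx /= !mulr1.
split=> // k.
case: (boolP [exists i, exists j, A i j != 0]) => [/existsP [i /existsP [j Hij]] | H]; last first.
  exfalso; move/negP: HX; apply; apply/eqP/matrixP=> i j; rewrite /schur_map /schur !mxE.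
  move: H; rewrite negb_exists => /forallP /(_ i); rewrite negb_exists => /forallP /(_ j).
  by rewrite negbK => /eqP->; rewrite mul0r.
have Hkj : A k j != 0.
  by apply: contraNneq Hij; rewrite (E i j k) => ->; rewrite mulr0.
have := E k j k; move/eqP; rewrite -subr_eq0 -{1}[A k j]mul1r -mulrBl mulf_eq0.
by rewrite (negbTE Hkj) orbF subr_eq0 => /eqP <-.
Qed.

Lemma iii_to_ii (F : fieldType) (n : nat) (A : 'M[F]_n) (hn : (0 < n)%N) :
  (forall i j k : 'I_n, A i j = A i k * A k j) /\ (forall i : 'I_n, A i i = 1) ->
  exists L : 'M[F]_n, [/\ is_diag_mx L, L \in unitmx &
            forall X : 'M[F]_n, schur_map A X = L *m X *m invmx L].
Proof.
move=> [E D]; set o := Ordinal hn.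
have Hinv : forall k, A k o * A o k = 1 by move=> k; rewrite -E D.
set L := diag_mx (\row_k A k o); set L' := diag_mx (\row_k A o k).
have LL : L *m L' = 1%:M.
  apply/matrixP=> i j; rewrite mul_diag_mx !mxE.
  case: (eqVneq i j) => [->|ne]; first by rewrite ?eqxx /= ?mulr1n Hinv.
  by rewrite mulr0n mulr0.
have [U _] := mulmx1_unit LL.
have IL : invmx L = L'.
  by rewrite -[RHS](mulKmx U) LL mulmx1.
exists L; split => //; first exact: diag_mx_is_diag.
move=> X; rewrite IL; apply/matrixP=> i j.
rewrite mul_mx_diag mul_diag_mx /schur_map /schur !mxE.
by rewrite (E i j o); ring.
Qed.

Lemma ii_to_i (F : fieldType) (n : nat) (A : 'M[F]_n) (hn : (0 < n)%N) :
  (exists L : 'M[F]_n, [/\ is_diag_mx L, L \in unitmx &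
            forall X : 'M[F]_n, schur_map A X = L *m X *m invmx L]) ->
  nonzero_map (schur_map A) /\ mul_hom (schur_map A).
Proof.
move=> [L [_ U H]]; split.
  exists 1%:M; rewrite H mulmx1 mulmxV //.
  apply/eqP => /matrixP /(_ (Ordinal hn) (Ordinal hn)).
  by rewrite !mxE eqxx /= => /eqP; rewrite oner_eq0.
move=> X Y; rewrite !H.
by rewrite -!mulmxA; congr (_ *m _); rewrite !mulmxA mulmxKV.
Qed.

Theorem proposition3p1 (F : fieldType) (n : nat) (A : 'M[F]_n) (hn : (0 < n)%N) :
  [/\ (nonzero_map (schur_map A) /\ mul_hom (schur_map A)) <->
        (exists L : 'M[F]_n, [/\ is_diag_mx L, L \in unitmx &
            forall X : 'M[F]_n, schur_map A X = L *m X *m invmx L]),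
      (exists L : 'M[F]_n, [/\ is_diag_mx L, L \in unitmx &
            forall X : 'M[F]_n, schur_map A X = L *m X *m invmx L]) <->
        ((forall i j k : 'I_n, A i j = A i k * A k j) /\ (forall i : 'I_n, A i i = 1)) &
      ((forall i j k : 'I_n, A i j = A i k * A k j) /\ (forall i : 'I_n, A i i = 1)) <->
        (nonzero_map (schur_map A) /\ mul_hom (schur_map A))].
Proof.
have h1 := @i_to_iii F n A; have h2 := @iii_to_ii F n A hn; have h3 := @ii_to_i F n A hn.
split; split; auto.
Qed.
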